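(* Let $d\ge1$, $N_1,\ldots,N_d\ge1$, and $p_j,q_j:\{0,\ldots,N_j\}\to[0,1]$ with $p_j(0)=q_j(0)=p_j(N_j)=q_j(N_j)=0$ and $\sum_k(p_k(i_k)+q_k(i_k))\le1$ on $\mathbb E=\{1,\ldots,N_1\}\times\cdots\times\{1,\ldots,N_d\}$. Let $\mathbf P_Z$ be the substochastic matrix on $\mathbb E$ with $\mathbf P_Z(\mathbf i,\mathbf i+\mathbf s_j)=p_j(i_j)$, $\mathbf P_Z(\mathbf i,\mathbf i-\mathbf s_j)=q_j(i_j)$ (when $\mathbf i\pm\mathbf s_j\in\mathbb E$), $\mathbf P_Z(\mathbf i,\mathbf i)=1-\sum_{k=1}^d(p_k(i_k)+q_k(i_k))$, and $0$ otherwise. Let $\preceq$ be the coordinatewise order on $\mathbb E$, $\mathbf C(\mathbf i,\mathbf i')=\mathbf 1(\mathbf i\preceq\mathbf i')$. Then $\mathbf P_X:=\mathbf C\mathbf P_Z^T\mathbf C^{-1}$ is given by $\mathbf P_X(\mathbf i,\mathbf i+\mathbf s_j)=q_j(i_j)$ (for $i_j<N_j$), $\mathbf P_X(\mathbf i,\mathbf i-\mathbf s_j)=p_j(i_j-1)$ (for $i_j>1$), $\mathbf P_X(\mathbf i,\mathbf i)=1-\sum_{k=1}^d\big(p_k(i_k-1)+q_k(i_k)\big)$, and $\mathbf P_X(\mathbf i,\mathbf i')=0$ for all other $\mathbf i'$.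
   Context: $\mathbf i=(i_1,\ldots,i_d)$, $\mathbf s_j$ is the $j$-th unit vector, $\mathbf i\preceq\mathbf i'$ iff $i_j\le i'_j$ for all $j$. *)

(* Defs.v *)
From HB Require Import structures.
From mathcomp Require Import all_boot all_order all_algebra.
Set Implicit Arguments. Unset Strict Implicit. Unset Printing Implicit Defensive.
Import Order.TTheory GRing.Theory Num.Theory.
Local Open Scope ring_scope.

(* The state space E = {1..N_1} x ... x {1..N_d}.  An element x : stateE N
   stores, in coordinate j, an ordinal x j : 'I_(N j); the actual coordinate
   i_j in {1,..,N_j} is  crd x j = (x j).+1. *)
Definition stateE (d : nat) (N : 'I_d -> nat) : finType :=
  {dffun forall j : 'I_d, 'I_(N j)}.

Definition crd d (N : 'I_d -> nat) (x : stateE N) (j : 'I_d) : nat :=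
  (nat_of_ord (x j)).+1.

Definition is_up d (N : 'I_d -> nat) (x y : stateE N) (j : 'I_d) : bool :=
  [forall k, crd y k == crd x k + (k == j)]%N.
Definition is_down d (N : 'I_d -> nat) (x y : stateE N) (j : 'I_d) : bool :=
  [forall k, crd y k + (k == j) == crd x k]%N.

Section Kernels.
Variables (R : realFieldType) (d : nat) (N : 'I_d -> nat)
  (p q : 'I_d -> nat -> R).

Definition PZ (x y : stateE N) : R :=
  if x == y then 1 - \sum_(k < d) (p k (crd x k) + q k (crd x k))
  else \sum_(j < d) ((if is_up x y j then p j (crd x j) else 0)
                   + (if is_down x y j then q j (crd x j) else 0)).

Definition PX (x y : stateE N) : R :=
  if x == y then 1 - \sum_(k < d) (p k (crd x k).-1 + q k (crd x k))
  else \sum_(j < d) ((if is_up x y j then q j (crd x j) else 0)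
                   + (if is_down x y j then p j (crd x j).-1 else 0)).

Definition Cker (x y : stateE N) : R :=
  if [forall k, crd x k <= crd y k]%N then 1 else 0.
End Kernels.

Definition mx_of (R : nzRingType) (T : finType) (f : T -> T -> R)
  : 'M[R]_#|T| :=
  \matrix_(a < #|T|, b < #|T|) f (enum_val a) (enum_val b).

(* Main.v *)
Require Import Defs.
From HB Require Import structures.
From mathcomp Require Import all_boot all_order all_algebra zify ring lra.
Import Order.TTheory GRing.Theory Num.Theory.
Local Open Scope ring_scope.
Set Implicit Arguments. Unset Strict Implicit.

Section H.
Variables (d : nat) (N : 'I_d -> nat).

Lemma crd_le (x : stateE N) k : (0 < crd x k <= N k)%N.
Proof. by rewrite /crd ltn_ord. Qed.

Lemma crd_inj (x y : stateE N) : (forall k, crd x k = crd y k) -> x = y.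
Proof. move=> h; apply/ffunP => k; apply/val_inj; have := h k; rewrite /crd; by case. Qed.

Definition upz (y : stateE N) j : stateE N :=
  [ffun k => insubd (y k) ((y k) + (k==j))%N].
Definition downz (y : stateE N) j : stateE N :=
  [ffun k => insubd (y k) ((y k) - (k==j))%N].

Lemma crd_upz y j k : (crd y j < N j)%N -> crd (upz y j) k = (crd y k + (k == j))%N.
Proof.
rewrite /crd /upz ffunE val_insubd => h.
case: (eqVneq k j) => [->|kj] /=. { by rewrite ?eqxx !addn1 ifT. }
by rewrite !addn0 ltn_ord.
Qed.

Lemma crd_downz y j k : (1 < crd y j)%N -> crd (downz y j) k = (crd y k - (k == j))%N.
Proof.
rewrite /crd /downz ffunE val_insubd => h.
have := ltn_ord (y k).
case: (eqVneq k j) => [->|kj] /= hk; last by rewrite !subn0 hk.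
case: (y j) h hk => a /= ? ?; rewrite ifT; lia.
Qed.

Lemma forall_split (P : 'I_d -> bool) j :
  [forall k, P k] = P j && [forall k, (k != j) ==> P k].
Proof.
apply/forallP/andP => [h|[h1 /forallP h2] k]; first by split=> //; apply/forallP => k; apply/implyP.
case: (eqVneq k j) => [->//|kj]; exact: (implyP (h2 k) kj).
Qed.


Definition Ob (x y : stateE N) j := [forall k, (k != j) ==> (crd x k <= crd y k)%N].

Lemma fsplit x y j (F : nat -> nat -> bool -> bool) (hF : forall a b, F a b false = (a <= b)%N) :
 [forall k, F (crd x k) (crd y k) (k == j)] = F (crd x j) (crd y j) true && Ob x y j.
Proof.
rewrite (forall_split _ j) eqxx; congr andb; apply: eq_forallb => k.
by case: eqVneq => //= _; rewrite hF.
Qed.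

Lemma fs_le x y j : [forall k, crd x k <= crd y k]%N = (crd x j <= crd y j)%N && Ob x y j.
Proof. exact: (@fsplit x y j (fun a b _ => a <= b)%N). Qed.
Lemma fs_upL x y j : [forall k, crd x k <= crd y k + (k == j)]%N = (crd x j <= crd y j + 1)%N && Ob x y j.
Proof. apply: (@fsplit x y j (fun a b t => a <= b + t)%N) => a b; by rewrite addn0. Qed.
Lemma fs_downL x y j : [forall k, crd x k <= crd y k - (k == j)]%N = (crd x j <= crd y j - 1)%N && Ob x y j.
Proof. apply: (@fsplit x y j (fun a b t => a <= b - t)%N) => a b; by rewrite subn0. Qed.
Lemma fs_upR x y j : [forall k, crd x k + (k == j) <= crd y k]%N = (crd x j + 1 <= crd y j)%N && Ob x y j.
Proof. apply: (@fsplit x y j (fun a b t => a + t <= b)%N) => a b; by rewrite addn0. Qed.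
Lemma fs_downR x y j : [forall k, crd x k - (k == j) <= crd y k]%N = (crd x j - 1 <= crd y j)%N && Ob x y j.
Proof. apply: (@fsplit x y j (fun a b t => a - t <= b)%N) => a b; by rewrite subn0. Qed.

Lemma up_iff y z j : (crd y j < N j)%N -> is_up y z j = (z == upz y j).
Proof.
move=> h; apply/forallP/eqP => [hz|-> k]; last by rewrite crd_upz.
apply/crd_inj => i; rewrite crd_upz //; exact/eqP/hz.
Qed.

Lemma down_iff y z j : (1 < crd y j)%N -> is_down y z j = (z == downz y j).
Proof.
move=> h; apply/forallP/eqP => [hz|-> k].
  apply/crd_inj => i; rewrite crd_downz //; move/eqP: (hz i); case: (i == j) => /=; lia.
rewrite crd_downz //; apply/eqP; have := crd_le y k; have : (0 < crd y k)%N by []. case: (k == j) => /=; lia.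
Qed.

Variable R : realFieldType.

Lemma sum_up (f : stateE N -> R) y j :
  \sum_z (if is_up y z j then f z else 0) = if (crd y j < N j)%N then f (upz y j) else 0.
Proof.
case: ifP => h.
  rewrite (bigD1 (upz y j)) //= ?up_iff ?eqxx // big1 ?addr0 // => z /negbTE nz.
  by rewrite up_iff // nz.
apply: big1 => z _; case: ifP => // /forallP /(_ j) /eqP; rewrite eqxx.
have := crd_le z j; lia.
Qed.

Lemma sum_down (f : stateE N -> R) y j :
  \sum_z (if is_down y z j then f z else 0) = if (1 < crd y j)%N then f (downz y j) else 0.
Proof.
case: ifP => h.
  rewrite (bigD1 (downz y j)) //= ?down_iff ?eqxx // big1 ?addr0 // => z /negbTE nz.
  by rewrite down_iff // nz.
apply: big1 => z _; case: ifP => // /forallP /(_ j) /eqP; rewrite eqxx.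
have := crd_le z j; lia.
Qed.


Lemma CupL x y j (c : R) :
  \sum_z Cker R x z * (if is_up y z j then c else 0) =
  if (crd y j < N j)%N && ((crd x j <= crd y j + 1)%N && Ob x y j) then c else 0.
Proof.
rewrite (eq_bigr (fun z => if is_up y z j then Cker R x z * c else 0)); last first.
  by move=> z _; case: ifP; rewrite ?mulr0.
rewrite sum_up; case: ifP => h //=.
rewrite /Cker (eq_forallb (fun k => congr1 (fun t => crd x k <= t)%N (crd_upz k h))).
by rewrite fs_upL; case: ifP; rewrite ?mul1r ?mul0r.
Qed.

Lemma CdownL x y j (c : R) :
  \sum_z Cker R x z * (if is_down y z j then c else 0) =
  if (1 < crd y j)%N && ((crd x j <= crd y j - 1)%N && Ob x y j) then c else 0.
Proof.
rewrite (eq_bigr (fun z => if is_down y z j then Cker R x z * c else 0)); last first.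
  by move=> z _; case: ifP; rewrite ?mulr0.
rewrite sum_down; case: ifP => h //=.
rewrite /Cker (eq_forallb (fun k => congr1 (fun t => crd x k <= t)%N (crd_downz k h))).
by rewrite fs_downL; case: ifP; rewrite ?mul1r ?mul0r.
Qed.

Lemma CupR x y j (c : R) :
  \sum_z (if is_up x z j then c else 0) * Cker R z y =
  if (crd x j < N j)%N && ((crd x j + 1 <= crd y j)%N && Ob x y j) then c else 0.
Proof.
rewrite (eq_bigr (fun z => if is_up x z j then c * Cker R z y else 0)); last first.
  by move=> z _; case: ifP; rewrite ?mul0r.
rewrite sum_up; case: ifP => h //=.
rewrite /Cker (eq_forallb (fun k => congr1 (fun t => t <= crd y k)%N (crd_upz k h))).
by rewrite fs_upR; case: ifP; rewrite ?mulr1 ?mulr0.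
Qed.

Lemma CdownR x y j (c : R) :
  \sum_z (if is_down x z j then c else 0) * Cker R z y =
  if (1 < crd x j)%N && ((crd x j - 1 <= crd y j)%N && Ob x y j) then c else 0.
Proof.
rewrite (eq_bigr (fun z => if is_down x z j then c * Cker R z y else 0)); last first.
  by move=> z _; case: ifP; rewrite ?mul0r.
rewrite sum_down; case: ifP => h //=.
rewrite /Cker (eq_forallb (fun k => congr1 (fun t => t <= crd y k)%N (crd_downz k h))).
by rewrite fs_downR; case: ifP; rewrite ?mulr1 ?mulr0.
Qed.


Variables (p q : 'I_d -> nat -> R).

Lemma upxx (y : stateE N) j : is_up y y j = false.
Proof. apply/negbTE/negP => /forallP /(_ j) /eqP; rewrite eqxx; lia. Qed.
Lemma downxx (y : stateE N) j : is_down y y j = false.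
Proof. apply/negbTE/negP => /forallP /(_ j) /eqP; rewrite eqxx; lia. Qed.

Lemma PZ_split (y z : stateE N) : PZ p q y z = (if y == z then 1 - \sum_(k < d) (p k (crd y k) + q k (crd y k)) else 0)
  + \sum_(j < d) ((if is_up y z j then p j (crd y j) else 0)
                   + (if is_down y z j then q j (crd y j) else 0)).
Proof.
rewrite /PZ; case: eqP => [<-|_]; last by rewrite add0r.
by rewrite [X in _ = _ + X]big1 ?addr0 // => j _; rewrite upxx downxx addr0.
Qed.

Lemma PX_split (y z : stateE N) : PX p q y z = (if y == z then 1 - \sum_(k < d) (p k (crd y k).-1 + q k (crd y k)) else 0)
  + \sum_(j < d) ((if is_up y z j then q j (crd y j) else 0)
                   + (if is_down y z j then p j (crd y j).-1 else 0)).
Proof.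
rewrite /PX; case: eqP => [<-|_]; last by rewrite add0r.
by rewrite [X in _ = _ + X]big1 ?addr0 // => j _; rewrite upxx downxx addr0.
Qed.

Lemma perj (pj qj : nat -> R) (n a b : nat) (o : bool) :
  (0 < a <= n)%N -> (0 < b <= n)%N -> pj 0%N = 0 -> pj n = 0 ->
  (if (b < n)%N && ((a <= b + 1)%N && o) then pj b else 0)
  + (if (1 < b)%N && ((a <= b - 1)%N && o) then qj b else 0)
  - (if (a <= b)%N && o then 1 else 0) * (pj b + qj b)
  = (if (a < n)%N && ((a + 1 <= b)%N && o) then qj a else 0)
  + (if (1 < a)%N && ((a - 1 <= b)%N && o) then pj a.-1 else 0)
  - (if (a <= b)%N && o then 1 else 0) * (pj a.-1 + qj a).
Proof.
move=> ha hb p0 pn; case: o; last by rewrite !andbF !mul0r !subr0 !addr0.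
rewrite !andbT.
have -> : (if (b < n)%N && (a <= b + 1)%N then pj b else 0) = if (a <= b + 1)%N then pj b else 0.
  case: ltnP => hbn //=; case: ifP => // _; have -> : b = n by lia. by [].
have -> : ((1 < b) && (a <= b - 1))%N = (a < b)%N by lia.
have -> : ((a < n) && (a + 1 <= b))%N = (a < b)%N by lia.
have -> : (if (1 < a)%N && (a - 1 <= b)%N then pj a.-1 else 0) = if (a <= b + 1)%N then pj a.-1 else 0.
  have -> : (a - 1 <= b)%N = (a <= b + 1)%N by lia.
  case: (ltnP 1 a) => h1 //=; case: ifP => // _; have -> : a = 1%N by lia. by [].
case: (ltngtP a b) => hab.
- rewrite !ifT; try lia. ring.
- rewrite !mul0r !subr0 !add0r !addr0; case: (ltnP (b + 1) a) => h2.
    by [].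
  have ea : a.-1 = b by lia.
  by rewrite ea.
- subst a; rewrite !ifT; try lia. ring.
Qed.


Lemma key (p0 : forall j, p j 0%N = 0) (pN : forall j, p j (N j) = 0) (x y : stateE N) :
  \sum_z Cker R x z * PZ p q y z = \sum_z PX p q x z * Cker R z y.
Proof.
under eq_bigr do rewrite PZ_split mulrDr mulr_sumr.
under [RHS]eq_bigr do rewrite PX_split mulrDl mulr_suml.
rewrite !big_split /=. rewrite [X in _ + X = _]exchange_big [X in _ = _ + X]exchange_big /=.
set SZ := (\sum_(i0 < d) p i0 (crd y i0) + \sum_(i0 < d) q i0 (crd y i0)).
set SX := (\sum_(i0 < d) p i0 (x i0) + \sum_(i0 < d) q i0 (crd x i0)).
have -> : \sum_z Cker R x z * (if y == z then 1 - SZ else 0) = Cker R x y * (1 - SZ).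
  rewrite (bigD1 y) //= eqxx big1 ?addr0 // => z /negbTE; rewrite eq_sym => ->; by rewrite mulr0.
have -> : \sum_z (if x == z then 1 - SX else 0) * Cker R z y = (1 - SX) * Cker R x y.
  rewrite (bigD1 x) //= eqxx big1 ?addr0 // => z /negbTE; rewrite eq_sym => ->; by rewrite mul0r.
under eq_bigr do rewrite (eq_bigr _ (fun z _ => mulrDr _ _ _)) big_split /= CupL CdownL.
under [X in _ = _ + X]eq_bigr do rewrite (eq_bigr _ (fun z _ => mulrDl _ _ _)) big_split /= CupR CdownR.
rewrite /SZ /SX -!big_split /= mulrBr mulr1 mulrBl mul1r mulr_sumr mulr_suml.
under [X in _ = _ - X + _]eq_bigr do rewrite mulrC.
rewrite -addrA -[RHS]addrA; congr (_ + _).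
rewrite addrC -sumrB [RHS]addrC -sumrB; apply: eq_bigr => i _.
rewrite /Cker (fs_le _ _ i).
have hx := crd_le x i; have hy := crd_le y i.
exact: (@perj (p i) (q i) (N i) (crd x i) (crd y i) (Ob x y i) hx hy (p0 i) (pN i)).
Qed.


Lemma sum_T (F : stateE N -> R) : \sum_(a < #|stateE N|) F (enum_val a) = \sum_z F z.
Proof. by rewrite -(big_enum_val (A := stateE N)); apply: eq_bigl => z; rewrite inE. Qed.

Definition W (y : stateE N) := (\sum_(k < d) crd y k)%N.

Lemma W_lt (z y : stateE N) : [forall k, crd z k <= crd y k]%N -> z != y -> (W z < W y)%N.
Proof.
move=> /forallP hle nzy.
have [k hk] : exists k, (crd z k < crd y k)%N.
  apply/existsP; apply: contraNT nzy; rewrite negb_exists => /forallP hn.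
  apply/eqP/crd_inj => k; have := hle k; have := hn k; rewrite -leqNgt; lia.
rewrite /W (bigD1 k) // [X in (_ < X)%N](bigD1 k) //.
have : (\sum_(i < d | i != k) crd z i <= \sum_(i < d | i != k) crd y i)%N.
  by apply: leq_sum => i _; exact: hle.
exact: leq_add hk.
Qed.

Lemma Cunit : mx_of (@Cker R d N) \in unitmx.
Proof.
rewrite unitmxE unitfE; apply/det0P => -[v nzv vC]; case/eqP: nzv.
pose w z := v ord0 (enum_rank z).
have hw : forall y, \sum_z w z * Cker R z y = 0.
  move=> y; have := congr1 (fun M : 'rV[R]_#|stateE N| => M ord0 (enum_rank y)) vC; rewrite !mxE => e; rewrite -[X in _ = X]e.
  rewrite -sum_T; apply: eq_bigr => a _; rewrite /w enum_valK mxE enum_rankK.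
  by [].
have hn : forall n y, (W y < n)%N -> w y = 0.
  elim => [|n IH] y //; rewrite ltnS => hy.
  have := hw y; rewrite (bigD1 y) //= big1 ?addr0.
    by rewrite /Cker ifT ?mulr1 //; apply/forallP => k.
  move=> z nzy; rewrite /Cker; case: ifP => h; last by rewrite mulr0.
  rewrite IH ?mul0r //; exact: leq_trans (W_lt h nzy) hy.
apply/rowP => i; rewrite mxE -(enum_valK i).
have -> : (0 : 'I_1) = ord0 by apply/val_inj.
exact: (hn (W (enum_val i)).+1).
Qed.

End H.

Unset Implicit Arguments. Set Strict Implicit.

Theorem mainTheorem4 (R : realFieldType) (d : nat) (N : 'I_d -> nat)
  (p q : 'I_d -> nat -> R) :
  (0 < d)%N ->
  (forall j, 0 < N j)%N ->
  (forall j k, (k <= N j)%N -> 0 <= p j k <= 1) ->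
  (forall j k, (k <= N j)%N -> 0 <= q j k <= 1) ->
  (forall j, p j 0%N = 0 /\ q j 0%N = 0 /\ p j (N j) = 0 /\ q j (N j) = 0) ->
  (forall x : stateE N, \sum_(k < d) (p k (crd x k) + q k (crd x k)) <= 1) ->
  let C := mx_of (@Cker R d N) in
  C \in unitmx /\
  C *m (mx_of (PZ p q))^T *m invmx C = mx_of (PX p q).
Proof.
move=> _ _ _ _ hpq _ C.
have hC : C \in unitmx by exact: Cunit.
split => //.
have E : C *m (mx_of (PZ p q))^T = mx_of (PX p q) *m C.
  apply/matrixP => a b; rewrite !mxE.
  under eq_bigr do rewrite !mxE.
  under [RHS]eq_bigr do rewrite !mxE.
  rewrite (sum_T (fun z => Cker R (enum_val a) z * PZ p q (enum_val b) z)).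
  rewrite (sum_T (fun z => PX p q (enum_val a) z * Cker R z (enum_val b))).
  apply: key => j; have [? [? [? ?]]] := hpq j; done.
by rewrite E mulmxK.
Qed.
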